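(* Let $A$ be a vector space with bilinear operations $\star,[-,-]$, and $x\cdot y=x\star y+y\star x$. (1) If $(A,\cdot,[-,-])$ is a transposed Poisson algebra, $(A,\star)$ is anti-Zinbiel, and $(-\mathcal{L}_{\star},\mathrm{ad},A)$ is a representation of the transposed Poisson algebra $(A,\cdot,[-,-])$, then $(A,\star,[-,-])$ is a TALO algebra, i.e. $x\star[y,z]=[x,y]\star z=[x,y\star z]=0$ for all $x,y,z$. (2) Conversely, if $(A,\star,[-,-])$ is a TALO algebra, then $(A,\cdot,[-,-])$ is a transposed Poisson algebra with representation $(-\mathcal{L}_{\star},\mathrm{ad},A)$.
   Context: Finite-dimensional spaces, characteristic zero. $\mathcal{L}_\star(x)y=x\star y$, $\mathrm{ad}(x)y=[x,y]$. Anti-Zinbiel: $x\star(y\star z)=-(x\star y+y\star x)\star z=x\star(z\star y)$. Transposed Poisson algebra: $(A,\cdot)$ commutative associative, $(A,[-,-])$ Lie, $2z\cdot[x,y]=[z\cdot x,y]+[x,z\cdot y]$. A representation of a transposed Poisson algebra is $(\mu,\rho,V)$ with $\mu(x\cdot y)=\mu(x)\mu(y)$, $\rho([x,y])=[\rho(x),\rho(y)]$, $2\mu(x)\rho(y)=\rho(x\cdot y)+\rho(y)\mu(x)$, $2\mu([x,y])=\rho(x)\mu(y)-\rho(y)\mu(x)$. A TALO algebra is $(A,\star,[-,-])$ with $(A,\star)$ anti-Zinbiel, $(A,[-,-])$ Lie, and $x\star[y,z]=[x,y]\star z=[x,y\star z]=0$ for all $x,y,z$. *)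

(* Defs.v *)
From HB Require Import structures.
From mathcomp Require Import all_boot all_order all_algebra.
Set Implicit Arguments. Unset Strict Implicit. Unset Printing Implicit Defensive.
Import GRing.Theory.
Local Open Scope ring_scope.

Section Defs.
Variables (F : fieldType) (A : lmodType F).

Definition bilinear_op (m : A -> A -> A) :=
  (forall (a : F) x y z, m (a *: x + y) z = a *: m x z + m y z) /\
  (forall (a : F) x y z, m z (a *: x + y) = a *: m z x + m z y).

Definition comm_assoc (m : A -> A -> A) :=
  (forall x y, m x y = m y x) /\ (forall x y z, m x (m y z) = m (m x y) z).

Definition lie_op (b : A -> A -> A) :=
  (forall x, b x x = 0) /\
  (forall x y z, b x (b y z) + b y (b z x) + b z (b x y) = 0).

Definition transposed_poisson (m b : A -> A -> A) :=
  [/\ comm_assoc m, lie_op b &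
      forall x y z, (m z (b x y)) *+ 2 = b (m z x) y + b x (m z y)].

Definition anti_zinbiel (s : A -> A -> A) :=
  forall x y z, s x (s y z) = - s (s x y + s y x) z /\
                s x (s y z) = s x (s z y).

Definition tp_representation (m b : A -> A -> A) (V : lmodType F)
  (mu rho : A -> V -> V) :=
  [/\ (forall x, linear (mu x)) /\ (forall x, linear (rho x)),
      (forall (a : F) x y v, mu (a *: x + y) v = a *: mu x v + mu y v) /\
      (forall (a : F) x y v, rho (a *: x + y) v = a *: rho x v + rho y v),
      forall x y v, mu (m x y) v = mu x (mu y v),
      forall x y v, rho (b x y) v = rho x (rho y v) - rho y (rho x v) &
      (forall x y v, (mu x (rho y v)) *+ 2 = rho (m x y) v + rho y (mu x v)) /\
      (forall x y v, (mu (b x y) v) *+ 2 = rho x (mu y v) - rho y (mu x v))].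

Definition TALO (s b : A -> A -> A) :=
  [/\ anti_zinbiel s, lie_op b &
      forall x y z, [/\ s x (b y z) = 0, s (b x y) z = 0 & b x (s y z) = 0]].

End Defs.

(* Main.v *)
Require Import Defs.
From HB Require Import structures.
From mathcomp Require Import all_boot all_order all_algebra.
Import GRing.Theory.
Local Open Scope ring_scope.

Lemma abel1 (V : zmodType) (P Q S1 S2 X1 X2 : V) :
  (- S1) *+ 2 = (Q + P) + (- X1) ->
  (S1 + S2) *+ 2 = (Q + P) + (X1 + X2) ->
  (- S2) *+ 2 = (- X2) - (- - P) -> P + Q *+ 2 = 0.
Proof.
rewrite !mulNrn opprK mulrnDl => E1 E2 E3.
have e1 : S1 *+ 2 = X1 - (Q + P) by rewrite -[S1 *+ 2]opprK E1 opprD opprK addrC.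
have e3 : S2 *+ 2 = X2 + P by rewrite -[S2 *+ 2]opprK E3 opprD !opprK.
rewrite e1 e3 in E2.
move/eqP: E2; rewrite -subr_eq0 => /eqP E2.
apply/eqP; rewrite -oppr_eq0; apply/eqP; rewrite -E2.
rewrite !opprD !addrA (addrAC _ X2 P) addrNK.
rewrite (addrAC _ X2) (addrAC _ X2) (addrAC _ X2) addrK.
rewrite (addrAC _ (-P) (-X1)) (addrAC _ (-Q) (-X1)) (addrAC _ (-Q) (-X1)) addrN add0r.
by rewrite [RHS]addrC addrA.
Qed.

Section BL.
Variables (F : fieldType) (A : lmodType F) (m : A -> A -> A).
Hypothesis Hm : bilinear_op m.
Lemma bDl x y z : m (x + y) z = m x z + m y z.
Proof. by rewrite -[x]scale1r Hm.1 !scale1r. Qed.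
Lemma bDr x y z : m z (x + y) = m z x + m z y.
Proof. by rewrite -[x]scale1r Hm.2 !scale1r. Qed.
Lemma b0l z : m 0 z = 0.
Proof. by apply: (addIr (m 0 z)); rewrite add0r -bDl addr0. Qed.
Lemma b0r z : m z 0 = 0.
Proof. by apply: (addIr (m z 0)); rewrite add0r -bDr addr0. Qed.
Lemma bNl x z : m (- x) z = - m x z.
Proof. by rewrite -[- x]addr0 -scaleN1r Hm.1 b0l addr0 scaleN1r. Qed.
Lemma bNr x z : m z (- x) = - m z x.
Proof. by rewrite -[- x]addr0 -scaleN1r Hm.2 b0r addr0 scaleN1r. Qed.
Lemma lie_anti : lie_op m -> forall x y, m x y = - m y x.
Proof.
move=> [H0 _] x y; apply/eqP; rewrite -addr_eq0; apply/eqP.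
by have := H0 (x + y); rewrite !bDl !bDr !H0 add0r addr0 addrC.
Qed.
End BL.
Arguments bDl {F A m}. Arguments bDr {F A m}. Arguments b0l {F A m}. Arguments b0r {F A m}.
Arguments bNl {F A m}. Arguments bNr {F A m}. Arguments lie_anti {F A m}.

Lemma char_cancel (F : fieldType) (charF0 : [pchar F] =i pred0) (A : lmodType F)
  (v : A) n : (0 < n)%N -> v *+ n = 0 -> v = 0.
Proof.
move=> n0; rewrite -scaler_nat => /eqP; rewrite scaler_eq0 => /orP [|/eqP//].
by move/pcharf0P: charF0 => ->; case: n n0.
Qed.

Theorem mainTheorem13 (F : fieldType) (charF0 : [pchar F] =i pred0)
  (A : vectType F) (star br : A -> A -> A)
  (Hstar : bilinear_op star) (Hbr : bilinear_op br) :
  let dot := fun x y => star x y + star y x in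
  ((transposed_poisson dot br /\ anti_zinbiel star /\
    tp_representation dot br (fun x v => - star x v) (fun x v => br x v)) ->
   TALO star br) /\
  (TALO star br ->
   transposed_poisson dot br /\
   tp_representation dot br (fun x v => - star x v) (fun x v => br x v)).
Proof.
move=> dot; split.
  move=> [[_ Hlie TP] [AZ [_ _ _ _ [Hc Hd]]]].
  have anti := lie_anti Hbr Hlie.
  have K : forall x z y, br (star x z) y + br (star z x) y *+ 2 = 0.
    move=> x z y; apply: (@abel1 _ _ _ (star z (br x y)) (star (br x y) z)
      (br x (star z y)) (br x (star y z))).
    - by rewrite Hc /dot (bDl Hbr) (bNr Hbr).
    - by move: (TP x y z); rewrite /dot (bDl Hbr) (bDr Hbr).
    - by rewrite Hd !(bNr Hbr) (anti y).
  have Z : forall u v y, br (star u v) y = 0.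
    move=> u v y; have K1 := K u v y; have K2 := K v u y.
    move/eqP: K2; rewrite addr_eq0 => /eqP K2.
    rewrite K2 mulNrn -mulrnA in K1.
    move/eqP: K1; rewrite subr_eq0 => /eqP K1.
    apply: (@char_cancel _ charF0 _ _ 3) => //.
    by apply: (addIr (br (star u v) y)); rewrite add0r -mulrSr.
  have Z' : forall u v y, br y (star u v) = 0 by move=> u v y; rewrite anti Z oppr0.
  split => // x y z; split.
  - apply: (@char_cancel _ charF0 _ _ 2) => //; apply/eqP; rewrite -oppr_eq0 -mulNrn Hc.
    by rewrite /dot (bDl Hbr) !Z add0r (bNr Hbr) Z' oppr0 ?addr0.
  - apply: (@char_cancel _ charF0 _ _ 2) => //; apply/eqP; rewrite -oppr_eq0 -mulNrn Hd.
    by rewrite !(bNr Hbr) !Z' oppr0 subr0.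
  - exact: Z'.
move=> [AZ Hlie Hz].
have anti := lie_anti Hbr Hlie.
have s23 : forall x y z, star x (star y z) = star x (star z y) by move=> x y z; case: (AZ x y z).
have s12 : forall x y z, star x (star y z) = star y (star x z).
  by move=> x y z; rewrite (AZ x y z).1 (AZ y x z).1 addrC.
have sl : forall x y z, star (dot y z) x = - star y (star z x).
  by move=> x y z; rewrite (AZ y z x).1 opprK.
have Zl : forall u v y, br (star u v) y = 0 by move=> u v y; rewrite anti; case: (Hz y u v) => _ _ ->; rewrite oppr0.
have Zr : forall u v y, br y (star u v) = 0 by move=> u v y; by case: (Hz y u v).
have Sl : forall x y z, star (br x y) z = 0 by move=> x y z; case: (Hz x y z).
have Sr : forall x y z, star x (br y z) = 0 by move=> x y z; case: (Hz x y z).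
split; first split => //.
- split=> [x y|x y z]; first by rewrite /dot addrC.
  rewrite /dot.
  rewrite -[star (star y z + star z y) x]opprK -(AZ y z x).1.
  rewrite -[star (star x y + star y x) z]opprK -(AZ x y z).1.
  rewrite !(bDr Hstar).
  have e1 : star x (star z y) = star x (star y z) by rewrite s23.
  have e2 : star y (star z x) = star x (star y z) by rewrite s23 s12.
  have e3 : star z (star x y) = star x (star y z) by rewrite s12 s23.
  have e4 : star z (star y x) = star x (star y z) by rewrite s12 s23 s12.
  by rewrite e1 e2 e3 e4 addrK addKr.
- move=> x y z; rewrite /dot Sr Sl addr0 mul0rn.
  by rewrite (bDl Hbr) (bDr Hbr) !Zl !Zr !addr0.
split.
- split=> x a u v /=.
  + by rewrite Hstar.2 opprD scalerN.
  + by rewrite Hbr.2.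
- split=> a x y v /=.
  + by rewrite Hstar.1 opprD scalerN.
  + by rewrite Hbr.1.
- by move=> x y v /=; rewrite (bNr Hstar) opprK (AZ x y v).1.
- move=> x y v /=; have [_ J] := Hlie.
  have := J x y v; rewrite (anti v (br x y)) (anti v x) (bNr Hbr).
  by move/eqP; rewrite subr_eq0 => /eqP <-.
- split=> x y v /=.
  + by rewrite Sr oppr0 mul0rn /dot (bDl Hbr) !Zl addr0 (bNr Hbr) Zr oppr0 addr0.
  + by rewrite Sl oppr0 mul0rn !(bNr Hbr) !Zr oppr0 subr0.
Qed.
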